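(* Fix $\alpha\in[0,1)$, $\beta\in(0,1)$, $Q=1-\alpha$, $S=1-\beta$. Let $\nu_n^{\alpha,\beta}$ be the stationary law of the combined count chain and, for $0\le k\le n$, $w_{n,k}^{\alpha,\beta}:=\frac{(n)_k}{n^k}Q^kS^{k(k+1)/2}$ (with $(n)_k=n(n-1)\cdots(n-k+1)$, $w_{n,0}^{\alpha,\beta}=1$). There are constants $0<c<C<\infty$ and an integer $M<\infty$, depending only on $\alpha,\beta$, such that for all sufficiently large $n$ and all $M\le k\le n$, $cw_{n,k}^{\alpha,\beta}\le\nu_n^{\alpha,\beta}(k)\le Cw_{n,k}^{\alpha,\beta}$. Moreover $\nu_n^{\alpha,\beta}(n)\sim\frac{1}{(S;S)_\infty}\frac{n!}{n^n}Q^nS^{n(n+1)/2}$.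
   Context: The combined count chain $(K_t)$ on $\{0,\dots,n\}$: given $K_t=k$, with probability $k/n$, $K_{t+1}\sim\mathrm{Bin}(k-1,S)+\mathrm{Bernoulli}(QS)$, and with probability $(n-k)/n$, $K_{t+1}\sim\mathrm{Bin}(k,S)+\mathrm{Bernoulli}(QS)$ (independent summands; the first case is omitted when $k=0$). It is irreducible and aperiodic with unique stationary law $\nu_n^{\alpha,\beta}$. (It counts present types in the collector where each round a uniform type is refreshed to present w.p. $Q$, absent w.p. $\alpha$, then every present coupon is independently retained w.p. $S$.) $(S;S)_\infty:=\prod_{r\ge1}(1-S^r)$. *)

(* Defs.v *)
From Stdlib Require Import Reals Lra Lia Factorial.
From Coquelicot Require Import Coquelicot.
Open Scope R_scope.

Definition bin_pmf (m : nat) (p : R) (i : nat) : R :=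
  if (i <=? m)%nat then Binomial.C m i * p ^ i * (1 - p) ^ (m - i) else 0.

(* P(Bin(m,S) + Bernoulli(QS) = j), summands independent. *)
Definition binber_pmf (m : nat) (S Q : R) (j : nat) : R :=
  match j with
  | O => bin_pmf m S 0 * (1 - Q * S)
  | Datatypes.S j' => bin_pmf m S j * (1 - Q * S) + bin_pmf m S j' * (Q * S)
  end.

(* Transition probability k -> j of the combined count chain on {0,...,n},
   with Q = 1 - alpha, S = 1 - beta.  When k = 0 the first case has
   weight k/n = 0, i.e. it is omitted. *)
Definition trans (n : nat) (alpha beta : R) (k j : nat) : R :=
  let Q := 1 - alpha in let S := 1 - beta in
  INR k / INR n * binber_pmf (k - 1) S Q j
  + INR (n - k) / INR n * binber_pmf k S Q j.

Definition stationary (n : nat) (alpha beta : R) (pi : nat -> R) : Prop :=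
  (forall k, (k <= n)%nat -> 0 <= pi k) /\
  sum_f_R0 pi n = 1 /\
  (forall j, (j <= n)%nat ->
     sum_f_R0 (fun k => pi k * trans n alpha beta k j) n = pi j).

Fixpoint falling (n k : nat) : R :=
  match k with
  | O => 1
  | Datatypes.S k' => falling n k' * INR (n - k')
  end.

Definition wgt (n : nat) (alpha beta : R) (k : nat) : R :=
  falling n k / INR n ^ k * (1 - alpha) ^ k * (1 - beta) ^ (k * (k + 1) / 2).

Fixpoint qpoch_partial (S : R) (m : nat) : R :=
  match m with
  | O => 1
  | Datatypes.S m' => qpoch_partial S m' * (1 - S ^ m)
  end.

Definition qpoch_inf (S : R) : R := Lim_seq (qpoch_partial S).

(* Main.v *)
Require Import Defs.
From Stdlib Require Import Reals Lra Lia Factorial.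
From Coquelicot Require Import Coquelicot.
Open Scope R_scope.

Fixpoint binom (m j : nat) : nat :=
  match m, j with
  | _, O => 1%nat
  | O, S _ => 0%nat
  | S m', S j' => (binom m' j' + binom m' (S j'))%nat
  end.
Definition cb m j := INR (binom m j).

Lemma binom_small m j : (m < j)%nat -> binom m j = 0%nat.
Proof.
  revert j; induction m as [|m IH]; intros [|j] H; simpl; try lia; auto.
  rewrite !IH; lia.
Qed.

Lemma binom_diag m : binom m m = 1%nat.
Proof. induction m; simpl; auto. rewrite IHm, binom_small; lia. Qed.

Lemma binom_0 m : binom m 0 = 1%nat.
Proof. destruct m; reflexivity. Qed.

Lemma binom_abs m j : (S j * binom (S m) (S j) = S m * binom m j)%nat.
Proof.
  revert j; induction m as [|m IH]; intros [|j].
  - simpl; lia.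
  - simpl. lia.
  - change (binom (S (S m)) 1) with (binom (S m) 0 + binom (S m) 1)%nat.
    pose proof (IH 0%nat). rewrite !binom_0 in *. lia.
  - change (binom (S (S m)) (S (S j))) with (binom (S m) (S j) + binom (S m) (S (S j)))%nat.
    pose proof (IH j) as H1. pose proof (IH (S j)) as H2.
    change (binom (S m) (S j)) with (binom m j + binom m (S j))%nat in *.
    nia.
Qed.

Lemma cb_pos m j : 0 <= cb m j.
Proof. apply pos_INR. Qed.

Lemma cb_small m j : (m < j)%nat -> cb m j = 0.
Proof. intro H; unfold cb; rewrite binom_small; auto. Qed.

Lemma cb_diag m : cb m m = 1.
Proof. unfold cb; rewrite binom_diag; auto. Qed.

Lemma cb_0 m : cb m 0 = 1.
Proof. unfold cb; destruct m; reflexivity. Qed.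

Lemma cb_SS m j : cb (S m) (S j) = cb m j + cb m (S j).
Proof. unfold cb; simpl binom; rewrite plus_INR; auto. Qed.

Lemma cb_down k j : INR (S k) * cb k j = (INR (S k) - INR j) * cb (S k) j.
Proof.
  destruct j as [|j].
  - rewrite !cb_0; simpl; lra.
  - pose proof (binom_abs k j) as H.
    apply (f_equal INR) in H. rewrite !mult_INR in H. fold (cb (S k) (S j)) (cb k j) in H.
    rewrite cb_SS in *. lra.
Qed.

Lemma cb_L n k j : (k <= n)%nat ->
  INR k * cb (k - 1) j + INR (n - k) * cb k j = (INR n - INR j) * cb k j.
Proof.
  intro Hk. destruct k as [|k].
  - destruct j as [|j].
    + rewrite cb_0; simpl; rewrite Nat.sub_0_r; lra.
    + replace (0-1)%nat with 0%nat by lia. rewrite (cb_small 0 (S j)) by lia. simpl; lra.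
  - replace (S k - 1)%nat with k by lia. rewrite minus_INR by lia.
    rewrite cb_down. lra.
Qed.

Lemma Cbin m i : (i <= m)%nat -> Binomial.C m i = cb m i.
Proof.
  revert i; induction m as [|m IH]; intros i Hi.
  - replace i with 0%nat by lia. rewrite C_n_0, cb_0; auto.
  - destruct i as [|i]. rewrite C_n_0, cb_0; auto.
    destruct (Nat.eq_dec i m) as [->|Hne].
    + rewrite C_n_n, cb_diag; auto.
    + rewrite <- pascal by lia. rewrite cb_SS, !IH by lia. lra.
Qed.

Lemma sum_ext_zero f m N : (m <= N)%nat -> (forall i, (m < i <= N)%nat -> f i = 0) ->
  sum_f_R0 f N = sum_f_R0 f m.
Proof.
  intros HmN Hz. induction N as [|N IH].
  - replace m with 0%nat by lia; auto.
  - destruct (Nat.eq_dec m (S N)) as [->|Hne]; auto.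
    rewrite tech5, IH by (try lia; intros; apply Hz; lia). rewrite Hz by lia. lra.
Qed.

Lemma sum_scal_l c f N : sum_f_R0 (fun i => c * f i) N = c * sum_f_R0 f N.
Proof. induction N; simpl; [lra|]. rewrite IHN; lra. Qed.

Lemma sum_zero f N : (forall i, (i <= N)%nat -> f i = 0) -> sum_f_R0 f N = 0.
Proof. intro H. rewrite (sum_eq f (fun _ => 0)) by auto. rewrite sum_cte; lra. Qed.

Lemma sum_shift f N : sum_f_R0 f (S N) = f 0%nat + sum_f_R0 (fun i => f (S i)) N.
Proof. rewrite decomp_sum by lia. reflexivity. Qed.

Lemma sum_fubini (f : nat -> nat -> R) n m :
  sum_f_R0 (fun i => sum_f_R0 (fun j => f i j) m) n =
  sum_f_R0 (fun j => sum_f_R0 (fun i => f i j) n) m.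
Proof.
  induction n as [|n IH]; simpl; auto.
  rewrite IH, <- sum_plus. reflexivity.
Qed.

Lemma sum_nonneg f n : (forall i, (i <= n)%nat -> 0 <= f i) -> 0 <= sum_f_R0 f n.
Proof.
  intro H; induction n; simpl. apply H; lia.
  assert (0 <= f (S n)) by (apply H; lia). assert (0 <= sum_f_R0 f n) by (apply IHn; intros; apply H; lia). lra.
Qed.

Lemma sum_ge_term f n k : (forall i, (i <= n)%nat -> 0 <= f i) -> (k <= n)%nat ->
  f k <= sum_f_R0 f n.
Proof.
  intros H Hk. induction n as [|n IH].
  - replace k with 0%nat by lia. simpl; lra.
  - rewrite tech5. destruct (Nat.eq_dec k (S n)) as [->|Hne].
    + assert (0 <= sum_f_R0 f n). { apply sum_nonneg. intros; apply H; lia. } lra.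
    + assert (f k <= sum_f_R0 f n) by (apply IH; intros; try apply H; lia).
      assert (0 <= f (S n)) by (apply H; lia). lra.
Qed.

Lemma sum_le_term f n k : (forall i, (i <= n)%nat -> i <> k -> f i <= 0) -> (k <= n)%nat ->
  sum_f_R0 f n <= f k.
Proof.
  intros H Hk. induction n as [|n IH].
  - replace k with 0%nat by lia. simpl; lra.
  - rewrite tech5. destruct (Nat.eq_dec k (S n)) as [->|Hne].
    + assert (sum_f_R0 f n <= 0).
      { clear IH Hk. induction n. simpl. apply H; lia. rewrite tech5.
        assert (f (S n) <= 0) by (apply H; lia). assert (sum_f_R0 f n <= 0) by (apply IHn; intros; apply H; lia). lra. }
      lra.
    + assert (sum_f_R0 f n <= f k) by (apply IH; intros; try apply H; lia).
      assert (f (S n) <= 0) by (apply H; lia). lra.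
Qed.

Definition pm (s : R) m i := cb m i * s ^ i * (1 - s) ^ (m - i).

Lemma bin_pmf_eq m s i : bin_pmf m s i = pm s m i.
Proof.
  unfold bin_pmf, pm. destruct (Nat.leb_spec i m).
  - rewrite Cbin; auto.
  - rewrite cb_small; auto; lra.
Qed.

Lemma pm_small s m i : (m < i)%nat -> pm s m i = 0.
Proof. intro; unfold pm; rewrite cb_small; auto; lra. Qed.

Definition shp (s : R) m i := match i with O => 0 | S i' => pm s m i' end.

Lemma pm_pascal s m i : pm s (S m) i = (1 - s) * pm s m i + s * shp s m i.
Proof.
  destruct i as [|i]; unfold shp, pm.
  - rewrite !cb_0. simpl. rewrite Nat.sub_0_r. lra.
  - destruct (Nat.lt_ge_cases m i) as [H|H].
    + rewrite !cb_small by lia. lra.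
    + rewrite cb_SS. destruct (Nat.eq_dec i m) as [->|Hne].
      * rewrite (cb_small m (S m)) by lia. simpl. rewrite Nat.sub_diag. simpl. ring.
      * replace (S m - S i)%nat with (S (m - S i)) by lia.
        replace (m - i)%nat with (S (m - S i)) by lia. simpl. ring.
Qed.

Definition cbm1 i j := match j with O => 0 | S j' => cb i j' end.

Lemma cb_S i j : cb (S i) j = cb i j + cbm1 i j.
Proof. destruct j; simpl cbm1. rewrite !cb_0; lra. rewrite cb_SS; lra. Qed.

Lemma pm_mom s m j : sum_f_R0 (fun i => pm s m i * cb i j) m = cb m j * s ^ j.
Proof.
  revert j; induction m as [|m IH]; intro j.
  - simpl. unfold pm. rewrite cb_0. destruct j. rewrite cb_0; simpl; lra.
    rewrite cb_small by lia. simpl; lra.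
  - rewrite (sum_eq _ (fun i => (1 - s) * (pm s m i * cb i j) + s * (shp s m i * cb i j)))
      by (intros; rewrite pm_pascal; lra).
    rewrite sum_plus, !sum_scal_l.
    rewrite (sum_ext_zero _ m (S m)) by (try lia; intros; rewrite pm_small by lia; lra).
    rewrite IH. rewrite sum_shift. simpl shp.
    rewrite (sum_eq _ (fun i => pm s m i * cb i j + pm s m i * cbm1 i j))
      by (intros; rewrite cb_S; lra).
    rewrite sum_plus, IH.
    destruct j as [|j].
    + rewrite sum_zero by (intros; simpl; lra). rewrite !cb_0; simpl; lra.
    + simpl cbm1. rewrite IH, cb_SS. simpl. lra.
Qed.

Lemma binber_split m s q j : binber_pmf m s q j =
  (1 - q * s) * bin_pmf m s j + q * s * shp s m j.
Proof. destruct j; simpl; rewrite ?bin_pmf_eq; lra. Qed.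

Lemma binber_mom m s q j0 N : (S m <= N)%nat ->
  sum_f_R0 (fun i => binber_pmf m s q i * cb i (S j0)) N =
  s ^ S j0 * (cb m (S j0) + q * cb m j0).
Proof.
  intro HN.
  rewrite (sum_eq _ (fun i => (1 - q * s) * (pm s m i * cb i (S j0)) + q * s * (shp s m i * cb i (S j0))))
    by (intros; rewrite binber_split, bin_pmf_eq; lra).
  rewrite sum_plus, !sum_scal_l.
  rewrite (sum_ext_zero (fun i => pm s m i * cb i (S j0)) m N) by (try lia; intros; rewrite pm_small by lia; lra).
  rewrite pm_mom.
  destruct N as [|N]; [lia|]. rewrite sum_shift. simpl shp.
  rewrite (sum_ext_zero _ m N) by (try lia; intros; rewrite pm_small by lia; lra).
  rewrite (sum_eq _ (fun i => pm s m i * cb i (S j0) + pm s m i * cb i j0))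
      by (intros; rewrite cb_SS; lra).
  rewrite sum_plus, !pm_mom. simpl. lra.
Qed.

Lemma trans_mom n alpha beta k j0 : (1 <= n)%nat -> (k <= n)%nat ->
  sum_f_R0 (fun j => trans n alpha beta k j * cb j (S j0)) n =
  (1 - beta) ^ S j0 * ((INR n - INR (S j0)) * cb k (S j0)
     + (1 - alpha) * (INR n - INR j0) * cb k j0) / INR n.
Proof.
  intros Hn Hk. set (s := 1 - beta). set (q := 1 - alpha).
  assert (Hn0 : INR n <> 0) by (apply not_0_INR; lia).
  unfold trans; cbv zeta. fold s q.
  rewrite (sum_eq _ (fun j => INR k / INR n * (binber_pmf (k - 1) s q j * cb j (S j0))
        + INR (n - k) / INR n * (binber_pmf k s q j * cb j (S j0)))) by (intros; ring).
  rewrite sum_plus, !sum_scal_l.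
  set (S1 := sum_f_R0 _ n). set (S2 := sum_f_R0 (fun j => binber_pmf k s q j * _) n).
  assert (H1 : INR k * S1 = INR k * (s ^ S j0 * (cb (k - 1) (S j0) + q * cb (k - 1) j0))).
  { destruct k as [|k]. simpl; ring. unfold S1. rewrite binber_mom; auto. lia. }
  assert (H2 : INR (n - k) * S2 = INR (n - k) * (s ^ S j0 * (cb k (S j0) + q * cb k j0))).
  { destruct (Nat.eq_dec k n) as [->|Hne]. rewrite Nat.sub_diag; simpl; ring.
    unfold S2. rewrite binber_mom; auto. lia. }
  replace (INR k / INR n * S1 + INR (n - k) / INR n * S2) with
    ((INR k * S1 + INR (n - k) * S2) / INR n) by (field; auto).
  rewrite H1, H2.
  pose proof (cb_L n k (S j0) Hk). pose proof (cb_L n k j0 Hk).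
  apply (f_equal (fun x => x / INR n)).
  transitivity (s ^ S j0 * ((INR k * cb (k - 1) (S j0) + INR (n - k) * cb k (S j0))
     + q * (INR k * cb (k - 1) j0 + INR (n - k) * cb k j0))); [ring|].
  rewrite H, H0. ring.
Qed.

Definition Bm n (nu : nat -> R) j := sum_f_R0 (fun m => nu m * cb m j) n.

Lemma B_rec n alpha beta nu j0 : (1 <= n)%nat -> stationary n alpha beta nu ->
  Bm n nu (S j0) * INR n = (1 - beta) ^ S j0 * ((INR n - INR (S j0)) * Bm n nu (S j0)
     + (1 - alpha) * (INR n - INR j0) * Bm n nu j0).
Proof.
  intros Hn [Hpos [Hsum Hst]].
  assert (Hn0 : INR n <> 0) by (apply not_0_INR; lia).
  set (s := 1 - beta). set (q := 1 - alpha).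
  assert (E : Bm n nu (S j0) = sum_f_R0 (fun k => nu k *
      sum_f_R0 (fun j => trans n alpha beta k j * cb j (S j0)) n) n).
  { unfold Bm.
    rewrite (sum_eq _ (fun j => sum_f_R0 (fun k => nu k * trans n alpha beta k j * cb j (S j0)) n)).
    2:{ intros j Hj. rewrite <- (Hst j Hj). rewrite Rmult_comm, <- sum_scal_l.
        apply sum_eq; intros; ring. }
    rewrite sum_fubini. apply sum_eq; intros k Hk. rewrite <- sum_scal_l. apply sum_eq; intros; ring. }
  rewrite (sum_eq _ (fun k => (s ^ S j0 * (INR n - INR (S j0)) / INR n) * (nu k * cb k (S j0))
      + (s ^ S j0 * q * (INR n - INR j0) / INR n) * (nu k * cb k j0))) in E.
  2:{ intros k Hk. rewrite trans_mom by auto. fold s q. field; auto. }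
  rewrite sum_plus, !sum_scal_l in E. fold (Bm n nu (S j0)) (Bm n nu j0) in E.
  rewrite E at 1. fold s q. field; auto.
Qed.

Lemma pow_01 s k : 0 < s < 1 -> 0 < s ^ k <= 1.
Proof.
  intro H; induction k; simpl; [lra|]. split. nra. nra.
Qed.

Lemma pow_S_lt s k : 0 < s < 1 -> 0 < s ^ S k <= s.
Proof. intro H; pose proof (pow_01 s k H); simpl; split; nra. Qed.

Fixpoint Dp (n : nat) (s : R) (j : nat) : R :=
  match j with
  | O => 1
  | S j' => Dp n s j' * (1 - s ^ S j' * (INR n - INR (S j')) / INR n)
  end.

Lemma tri j : ((S j * (S j + 1)) / 2 = j * (j + 1) / 2 + S j)%nat.
Proof.
  replace (S j * (S j + 1))%nat with (j * (j + 1) + S j * 2)%nat by ring.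
  apply Nat.div_add; lia.
Qed.

Lemma wgt_S n alpha beta j : (j < n)%nat ->
  wgt n alpha beta (S j) = wgt n alpha beta j * (INR n - INR j) / INR n
     * (1 - alpha) * (1 - beta) ^ S j.
Proof.
  intro Hj. assert (Hn0 : INR n <> 0) by (apply not_0_INR; lia).
  assert (INR n ^ j <> 0) by (apply pow_nonzero; auto).
  unfold wgt. simpl falling. rewrite minus_INR by lia. rewrite tri, pow_add.
  simpl pow. field. auto.
Qed.

Lemma B0 n alpha beta nu : stationary n alpha beta nu -> Bm n nu 0 = 1.
Proof.
  intros [_ [Hs _]]. unfold Bm. rewrite <- Hs. apply sum_eq; intros; rewrite cb_0; ring.
Qed.

Lemma B_closed n alpha beta nu : (1 <= n)%nat -> stationary n alpha beta nu ->
  forall j, (j <= n)%nat -> Bm n nu j * Dp n (1 - beta) j = wgt n alpha beta j.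
Proof.
  intros Hn Hst. assert (Hn0 : INR n <> 0) by (apply not_0_INR; lia).
  induction j as [|j IH]; intro Hj.
  - rewrite (B0 _ _ _ _ Hst). unfold wgt. simpl. field.
  - pose proof (B_rec n alpha beta nu j Hn Hst) as R.
    set (X := (1 - beta) ^ S j) in *.
    assert (Hr : Bm n nu (S j) * (INR n - X * (INR n - INR (S j))) =
                 X * (1 - alpha) * (INR n - INR j) * Bm n nu j).
    { transitivity
        (Bm n nu (S j) * INR n - X * ((INR n - INR (S j)) * Bm n nu (S j))); [ring|].
      rewrite R. ring. }
    change (Dp n (1 - beta) (S j)) with (Dp n (1 - beta) j * (1 - (1 - beta) ^ S j * (INR n - INR (S j)) / INR n)). fold X.
    replace (Bm n nu (S j) * (Dp n (1 - beta) j * (1 - X * (INR n - INR (S j)) / INR n)))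
      with (Dp n (1 - beta) j * (Bm n nu (S j) * (INR n - X * (INR n - INR (S j)))) / INR n)
      by (field; auto).
    rewrite Hr, wgt_S by lia. rewrite <- IH by lia. fold X. field; auto.
Qed.

Lemma Dp_bounds n s j : (1 <= n)%nat -> 0 < s < 1 -> (j <= n)%nat ->
  0 < qpoch_partial s j /\ qpoch_partial s j <= Dp n s j /\ Dp n s j <= 1.
Proof.
  intros Hn Hs. assert (Hn0 : 0 < INR n) by (apply lt_0_INR; lia).
  induction j as [|j IH]; intro Hj.
  - simpl; lra.
  - destruct IH as [H1 [H2 H3]]; [lia|].
    change (qpoch_partial s (S j)) with (qpoch_partial s j * (1 - s ^ S j)).
    change (Dp n s (S j)) with (Dp n s j * (1 - s ^ S j * (INR n - INR (S j)) / INR n)).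
    pose proof (pow_S_lt s j Hs) as Hp.
    set (y := s ^ S j) in *.
    assert (Hr : 0 <= (INR n - INR (S j)) / INR n <= 1).
    { rewrite <- minus_INR by lia. split. apply Rdiv_le_0_compat; [apply pos_INR|lra].
      rewrite minus_INR by lia. apply Rmult_le_reg_r with (INR n); auto.
      unfold Rdiv; rewrite Rmult_assoc, Rinv_l by lra. pose proof (pos_INR (S j)). lra. }
    replace (1 - y * (INR n - INR (S j)) / INR n) with (1 - y * ((INR n - INR (S j)) / INR n))
      by (field; lra).
    set (r := (INR n - INR (S j)) / INR n) in *.
    assert (1 - y <= 1 - y * r <= 1) by nra.
    split; [nra|]. split; nra.
Qed.

Lemma fac_bounds n s j : (1 <= n)%nat -> 0 < s < 1 -> (S j <= n)%nat ->
  1 - s ^ S j <= 1 - s ^ S j * (INR n - INR (S j)) / INR n <= 1.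
Proof.
  intros Hn Hs Hj. assert (Hn0 : 0 < INR n) by (apply lt_0_INR; lia).
  pose proof (pow_S_lt s j Hs) as Hp. set (y := s ^ S j) in *.
  assert (Hr : 0 <= (INR n - INR (S j)) / INR n <= 1).
  { rewrite <- minus_INR by lia. split. apply Rdiv_le_0_compat; [apply pos_INR|lra].
    rewrite minus_INR by lia. apply Rmult_le_reg_r with (INR n); auto.
    unfold Rdiv; rewrite Rmult_assoc, Rinv_l by lra. pose proof (pos_INR (S j)). lra. }
  replace (1 - y * (INR n - INR (S j)) / INR n) with (1 - y * ((INR n - INR (S j)) / INR n))
    by (field; lra).
  set (r := (INR n - INR (S j)) / INR n) in *. nra.
Qed.

Lemma Dp_mono n s m j : (1 <= n)%nat -> 0 < s < 1 -> (m <= j)%nat -> (j <= n)%nat ->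
  Dp n s j <= Dp n s m.
Proof.
  intros Hn Hs Hmj Hjn. induction j as [|j IH].
  - replace m with 0%nat by lia; lra.
  - destruct (Nat.eq_dec m (S j)) as [->|Hne]; [lra|].
    change (Dp n s (S j)) with (Dp n s j * (1 - s ^ S j * (INR n - INR (S j)) / INR n)).
    pose proof (fac_bounds n s j Hn Hs Hjn).
    pose proof (pow_S_lt s j Hs).
    destruct (Dp_bounds n s j Hn Hs ltac:(lia)) as [H1 [H2 H3]].
    assert (Dp n s j <= Dp n s m) by (apply IH; lia). nra.
Qed.

Lemma Dp_upper n s m : (1 <= n)%nat -> 0 < s < 1 -> (m <= n)%nat ->
  Dp n s m <= qpoch_partial s m + INR m * INR m / INR n.
Proof.
  intros Hn Hs. assert (Hn0 : 0 < INR n) by (apply lt_0_INR; lia).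
  induction m as [|m IH]; intro Hm.
  - simpl. unfold Rdiv. rewrite Rmult_0_l, Rmult_0_l. lra.
  - change (Dp n s (S m)) with (Dp n s m * (1 - s ^ S m * (INR n - INR (S m)) / INR n)).
    change (qpoch_partial s (S m)) with (qpoch_partial s m * (1 - s ^ S m)).
    pose proof (pow_S_lt s m Hs).
    destruct (Dp_bounds n s m Hn Hs ltac:(lia)) as [H1 [H2 H3]].
    specialize (IH ltac:(lia)).
    set (y := s ^ S m) in *. set (D := Dp n s m) in *. set (P := qpoch_partial s m) in *.
    replace (1 - y * (INR n - INR (S m)) / INR n) with ((1 - y) + y * (INR (S m) / INR n))
      by (field; lra).
    assert (0 <= INR (S m) / INR n) by (apply Rdiv_le_0_compat; [apply pos_INR|lra]).
    assert (D * (1 - y) <= (P + INR m * INR m / INR n) * (1 - y)) by (apply Rmult_le_compat_r; lra).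
    assert (D * (y * (INR (S m) / INR n)) <= INR (S m) / INR n).
    { assert (0 <= D) by lra. assert (D * y <= 1) by nra. nra. }
    assert (INR m * INR m / INR n + INR (S m) / INR n <= INR (S m) * INR (S m) / INR n).
    { rewrite S_INR. unfold Rdiv. rewrite <- Rmult_plus_distr_r. apply Rmult_le_compat_r.
      left; apply Rinv_0_lt_compat; lra. pose proof (pos_INR m). nra. }
    assert (0 <= INR m * INR m / INR n).
    { apply Rdiv_le_0_compat; [|lra]. pose proof (pos_INR m); nra. }
    nra.
Qed.

Lemma qp_pos s m : 0 < s < 1 -> 0 < qpoch_partial s m.
Proof.
  intro Hs; induction m; simpl. lra. pose proof (pow_S_lt s m Hs). simpl in H. nra.
Qed.

Lemma qp_decr s m : 0 < s < 1 -> qpoch_partial s (S m) <= qpoch_partial s m.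
Proof.
  intro Hs. change (qpoch_partial s (S m)) with (qpoch_partial s m * (1 - s ^ S m)).
  pose proof (pow_S_lt s m Hs). pose proof (qp_pos s m Hs). nra.
Qed.

Lemma qp_mono s m m' : 0 < s < 1 -> (m <= m')%nat -> qpoch_partial s m' <= qpoch_partial s m.
Proof.
  intros Hs H. induction H. lra. pose proof (qp_decr s m0 Hs). lra.
Qed.

Lemma qp_lower s : 0 < s < 1 -> exists L, 0 < L /\ forall m, L <= qpoch_partial s m.
Proof.
  intro Hs.
  destruct (pow_lt_1_zero s ltac:(rewrite Rabs_pos_eq; lra) ((1 - s) / 2) ltac:(lra)) as [i0 Hi0].
  specialize (Hi0 (S i0) ltac:(lia)). rewrite Rabs_pos_eq in Hi0 by (left; apply pow_lt; lra).
  set (P0 := qpoch_partial s i0).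
  assert (HP0 : 0 < P0) by apply qp_pos, Hs.
  assert (Hd : forall d, P0 * (1 - (s ^ S i0 - s ^ S (i0 + d)) / (1 - s)) <= qpoch_partial s (i0 + d)).
  { induction d as [|d IH].
    - rewrite Nat.add_0_r. replace (s ^ S i0 - s ^ S i0) with 0 by ring.
      unfold Rdiv; rewrite Rmult_0_l. unfold P0. nra.
    - rewrite Nat.add_succ_r.
      change (qpoch_partial s (S (i0 + d))) with (qpoch_partial s (i0 + d) * (1 - s ^ S (i0 + d))).
      replace (s ^ S (S (i0 + d))) with (s * s ^ S (i0 + d)) by reflexivity.
      set (a := s ^ S (i0 + d)) in *.
      assert (Ha : 0 < a <= s ^ S i0).
      { unfold a. split. apply pow_lt; lra. replace (S (i0 + d)) with (S i0 + d)%nat by lia.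
        rewrite pow_add. pose proof (pow_01 s d Hs). pose proof (pow_lt s (S i0) ltac:(lra)). nra. }
      set (A := (s ^ S i0 - a) / (1 - s)) in *.
      assert (HA : 0 <= A) by (unfold A; apply Rdiv_le_0_compat; lra).
      replace ((s ^ S i0 - s * a) / (1 - s)) with (A + a) by (unfold A; field; lra).
      pose proof (pow_S_lt s (i0 + d) Hs). fold a in H.
      assert (P0 * (1 - A) * (1 - a) <= qpoch_partial s (i0 + d) * (1 - a))
        by (apply Rmult_le_compat_r; lra).
      assert (0 <= P0 * A * a) by (apply Rmult_le_pos; [apply Rmult_le_pos|]; lra). nra. }
  exists (P0 / 2). split; [lra|]. intro m.
  destruct (Nat.le_gt_cases i0 m) as [H|H].
  - replace m with (i0 + (m - i0))%nat by lia. eapply Rle_trans; [|apply Hd].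
    pose proof (pow_lt s (S (i0 + (m - i0))) ltac:(lra)).
    assert ((s ^ S i0 - s ^ S (i0 + (m - i0))) / (1 - s) <= 1/2).
    { apply Rmult_le_reg_r with (1 - s); [lra|]. unfold Rdiv. rewrite Rmult_assoc, Rinv_l by lra. lra. }
    nra.
  - pose proof (qp_mono s m i0 Hs ltac:(lia)). fold P0 in H0. lra.
Qed.

Lemma qinf_props s : 0 < s < 1 ->
  is_lim_seq (qpoch_partial s) (qpoch_inf s) /\ 0 < qpoch_inf s /\
  (forall m, qpoch_inf s <= qpoch_partial s m).
Proof.
  intro Hs. destruct (qp_lower s Hs) as [L [HL HLm]].
  assert (Hex : ex_finite_lim_seq (qpoch_partial s)).
  { apply ex_finite_lim_seq_decr with L. intro; apply qp_decr; auto. auto. }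
  assert (Hl : is_lim_seq (qpoch_partial s) (qpoch_inf s)) by (apply Lim_seq_correct'; auto).
  split; auto. split.
  - assert (Rbar_le L (qpoch_inf s)).
    { apply is_lim_seq_le with (fun _ => L) (qpoch_partial s); auto. apply is_lim_seq_const. }
    simpl in H. lra.
  - apply is_lim_seq_decr_compare; auto. intro; apply qp_decr; auto.
Qed.

Lemma Dp_lim s : 0 < s < 1 -> is_lim_seq (fun n => Dp n s n) (qpoch_inf s).
Proof.
  intro Hs. destruct (qinf_props s Hs) as [Hl [Hq Hqm]].
  apply is_lim_seq_Reals. apply is_lim_seq_Reals in Hl.
  intros eps Heps.
  destruct (Hl (eps / 2) ltac:(lra)) as [m Hm].
  specialize (Hm m ltac:(lia)). unfold R_dist in Hm.
  assert (Hm' : qpoch_partial s m < qpoch_inf s + eps / 2).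
  { apply Rabs_def2 in Hm. lra. }
  set (K := INR m * INR m).
  assert (HK : 0 <= K) by (unfold K; pose proof (pos_INR m); nra).
  destruct (archimed_cor1 (eps / (2 * (K + 1))) ltac:(apply Rdiv_lt_0_compat; lra)) as [N1 [HN1 HN1p]].
  exists (Nat.max (Nat.max m N1) 1). intros n Hn.
  unfold R_dist.
  assert (Hn1 : (1 <= n)%nat) by lia.
  destruct (Dp_bounds n s n Hn1 Hs (le_n n)) as [_ [H2 _]].
  pose proof (Hqm n).
  pose proof (Dp_mono n s m n Hn1 Hs ltac:(lia) (le_n n)).
  pose proof (Dp_upper n s m Hn1 Hs ltac:(lia)).
  assert (HN1n : INR N1 <= INR n) by (apply le_INR; lia).
  assert (HN1pos : 0 < INR N1) by (apply lt_0_INR; lia).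
  assert (K / INR n <= eps / 2).
  { assert (K / INR n <= K * / INR N1).
    { unfold Rdiv. apply Rmult_le_compat_l; auto. apply Rinv_le_contravar; lra. }
    assert (K * / INR N1 <= K * (eps / (2 * (K + 1)))) by (apply Rmult_le_compat_l; lra).
    assert (K * (eps / (2 * (K + 1))) <= eps / 2).
    { apply Rmult_le_reg_r with (2 * (K + 1)); [lra|].
      unfold Rdiv. field_simplify; [|lra]. nra. }
    lra. }
  unfold K in *. rewrite Rabs_pos_eq by lra. lra.
Qed.

Lemma bern h k : 0 <= h -> 1 + INR k * h + INR k * (INR k - 1) / 2 * h ^ 2 <= (1 + h) ^ k.
Proof.
  intro Hh. induction k as [|k IH].
  - simpl; lra.
  - rewrite S_INR. simpl pow. simpl pow in IH. pose proof (pos_INR k).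
    set (X := (1 + h) ^ k) in *.
    assert (H1 : (1 + h) * (1 + INR k * h + INR k * (INR k - 1) / 2 * (h * (h * 1))) <= (1 + h) * X)
      by (apply Rmult_le_compat_l; lra).
    assert (H2 : 0 <= INR k * (INR k - 1) / 2 * (h * (h * 1)) * h).
    { destruct k. simpl. lra. rewrite S_INR in *. pose proof (pos_INR k).
      assert (0 <= (INR k + 1) * (INR k + 1 - 1)) by nra.
      assert (0 <= h * h * h) by (repeat apply Rmult_le_pos; lra).
      replace ((INR k + 1) * (INR k + 1 - 1) / 2 * (h * (h * 1)) * h) with
        ((INR k + 1) * (INR k + 1 - 1) * (h * h * h) / 2) by field.
      apply Rdiv_le_0_compat; [apply Rmult_le_pos|]; lra. }
    assert (E : (1 + h) * (1 + INR k * h + INR k * (INR k - 1) / 2 * (h * (h * 1))) =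
      1 + (INR k + 1) * h + (INR k + 1) * (INR k + 1 - 1) / 2 * (h * (h * 1)) +
      INR k * (INR k - 1) / 2 * (h * (h * 1)) * h) by field.
    lra.
Qed.

Lemma M_exists s : 0 < s < 1 -> exists M, forall k, (M <= k)%nat ->
  INR (S k) * s ^ S k <= (1 - s) / 2.
Proof.
  intro Hs. set (h := / s - 1).
  assert (Hh : 0 < h). { unfold h. assert (1 < / s). { rewrite <- Rinv_1. apply Rinv_lt_contravar; lra. } lra. }
  assert (Hsh : s * (1 + h) = 1) by (unfold h; field; lra).
  destruct (archimed_cor1 ((1 - s) * h ^ 2 / 4)) as [N1 [HN1 HN1p]].
  { apply Rdiv_lt_0_compat; [|lra]. apply Rmult_lt_0_compat; [lra|]. apply pow_lt; lra. }
  exists N1. intros k Hk.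
  assert (HN1pos : 0 < INR N1) by (apply lt_0_INR; lia).
  assert (Hkk : INR N1 <= INR k) by (apply le_INR; lia).
  pose proof (bern h (S k) (Rlt_le _ _ Hh)) as Hb.
  set (P := (1 + h) ^ S k) in *.
  assert (HsP : s ^ S k * P = 1).
  { unfold P. rewrite <- Rpow_mult_distr, Hsh. apply pow1. }
  rewrite S_INR in Hb.
  replace (INR k + 1 - 1) with (INR k) in Hb by ring.
  assert (Hh2 : 0 < h ^ 2) by (apply pow_lt; lra).
  assert (H4 : 4 < INR k * ((1 - s) * h ^ 2)).
  { assert (1 < INR N1 * ((1 - s) * h ^ 2 / 4)).
    { apply Rmult_lt_reg_l with (/ INR N1). apply Rinv_0_lt_compat; lra.
      rewrite <- Rmult_assoc, Rinv_l, Rmult_1_l, Rmult_1_r by lra. auto. }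
    assert (0 < (1 - s) * h ^ 2) by (apply Rmult_lt_0_compat; lra). nra. }
  assert (HP : (INR k + 1) * INR k / 2 * h ^ 2 <= P).
  { pose proof (pos_INR k). assert (0 <= (INR k + 1) * h) by nra. lra. }
  assert (0 < P) by (unfold P; apply pow_lt; lra).
  assert (Hgoal : 2 * INR (S k) <= (1 - s) * P).
  { rewrite S_INR. pose proof (pos_INR k).
    assert ((1 - s) * ((INR k + 1) * INR k / 2 * h ^ 2) <= (1 - s) * P) by (apply Rmult_le_compat_l; lra).
    assert (2 * (INR k + 1) <= (1 - s) * ((INR k + 1) * INR k / 2 * h ^ 2)).
    { replace ((1 - s) * ((INR k + 1) * INR k / 2 * h ^ 2)) with ((INR k + 1) * (INR k * ((1 - s) * h ^ 2)) / 2) by field.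
      nra. }
    lra. }
  assert (s ^ S k = / P) by (apply Rmult_eq_reg_r with P; [rewrite HsP, Rinv_l|]; lra).
  rewrite H0. apply Rmult_le_reg_r with P; auto. rewrite Rmult_assoc, Rinv_l by lra. lra.
Qed.

Lemma falling_fact n k : (k <= n)%nat -> falling n k * INR (fact (n - k)) = INR (fact n).
Proof.
  induction k as [|k IH]; intro Hk.
  - simpl. rewrite Nat.sub_0_r. ring.
  - simpl falling. rewrite <- IH by lia.
    replace (n - k)%nat with (S (n - S k)) by lia.
    change (fact (S (n - S k))) with (S (n - S k) * fact (n - S k))%nat.
    rewrite mult_INR. ring.
Qed.

Lemma falling_nonneg n k : 0 <= falling n k.
Proof. induction k; simpl. lra. apply Rmult_le_pos; auto. apply pos_INR. Qed.

Lemma wgt_nonneg n alpha beta k : (1 <= n)%nat -> alpha < 1 -> 0 < beta < 1 -> 0 <= wgt n alpha beta k.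
Proof.
  intros Hn Ha Hb. unfold wgt.
  assert (0 < INR n) by (apply lt_0_INR; lia).
  repeat apply Rmult_le_pos.
  - apply falling_nonneg.
  - left; apply Rinv_0_lt_compat, pow_lt; auto.
  - left; apply pow_lt; lra.
  - left; apply pow_lt; lra.
Qed.

Lemma Bm_n n nu : Bm n nu n = nu n.
Proof.
  unfold Bm. destruct n as [|n].
  - simpl. rewrite cb_0. ring.
  - rewrite tech5, cb_diag, sum_zero. ring.
    intros i Hi. rewrite cb_small by lia. ring.
Qed.

Lemma Bm_nonneg n nu j : (forall k, (k <= n)%nat -> 0 <= nu k) -> 0 <= Bm n nu j.
Proof.
  intro H. unfold Bm. apply sum_nonneg. intros. apply Rmult_le_pos; auto. apply cb_pos.
Qed.

Lemma nu_le_B n nu k : (forall k, (k <= n)%nat -> 0 <= nu k) -> (k <= n)%nat -> nu k <= Bm n nu k.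
Proof.
  intros H Hk. unfold Bm. replace (nu k) with (nu k * cb k k) at 1 by (rewrite cb_diag; ring).
  apply sum_ge_term with (f := fun m => nu m * cb m k); auto.
  intros. apply Rmult_le_pos; auto. apply cb_pos.
Qed.

Lemma bonf n nu k : (forall k, (k <= n)%nat -> 0 <= nu k) -> (k <= n)%nat ->
  Bm n nu k - INR (S k) * Bm n nu (S k) <= nu k.
Proof.
  intros H Hk. unfold Bm.
  replace (sum_f_R0 (fun m => nu m * cb m k) n - INR (S k) * sum_f_R0 (fun m => nu m * cb m (S k)) n)
    with (sum_f_R0 (fun m => nu m * cb m k) n + - INR (S k) * sum_f_R0 (fun m => nu m * cb m (S k)) n) by ring.
  rewrite <- (sum_scal_l (- INR (S k)) (fun m => nu m * cb m (S k)) n).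
  rewrite <- sum_plus.
  eapply Rle_trans.
  2:{ right. instantiate (1 := nu k * cb k k + - INR (S k) * (nu k * cb k (S k))).
      rewrite cb_diag, cb_small by lia; ring. }
  apply sum_le_term with (f := fun m => nu m * cb m k + - INR (S k) * (nu m * cb m (S k))); auto.
  intros m Hm Hmk. destruct (Nat.lt_ge_cases m k) as [Hl|Hl].
  - rewrite !cb_small by lia. lra.
  - destruct m as [|m]; [lia|].
    assert (E : INR (S k) * cb (S m) (S k) = (INR (S m) - INR k) * cb (S m) k).
    { rewrite <- (cb_down m k). pose proof (binom_abs m k) as Hb. apply (f_equal INR) in Hb.
      rewrite !mult_INR in Hb. unfold cb. exact Hb. }
    assert (1 <= INR (S m) - INR k).
    { rewrite <- minus_INR by lia. replace 1 with (INR 1) by reflexivity. apply le_INR; lia. }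
    pose proof (H (S m) Hm). pose proof (cb_pos (S m) k).
    replace (nu (S m) * cb (S m) k + - INR (S k) * (nu (S m) * cb (S m) (S k))) with
      (nu (S m) * cb (S m) k * (1 - (INR (S m) - INR k))) by (replace (- INR (S k) * (nu (S m) * cb (S m) (S k))) with (- nu (S m) * (INR (S k) * cb (S m) (S k))) by ring; rewrite E; ring).
    assert (0 <= nu (S m) * cb (S m) k) by (apply Rmult_le_pos; auto). nra.
Qed.

Theorem mainTheorem16 (alpha beta : R) :
  0 <= alpha < 1 -> 0 < beta < 1 ->
  forall nu : nat -> nat -> R,
    (forall n : nat, (1 <= n)%nat -> stationary n alpha beta (nu n)) ->
    (exists (c C : R) (M N : nat), 0 < c < C /\
       forall n k : nat, (N <= n)%nat -> (M <= k <= n)%nat ->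
         c * wgt n alpha beta k <= nu n k <= C * wgt n alpha beta k)
    /\
    is_lim_seq
      (fun n : nat => nu n n /
         (1 / qpoch_inf (1 - beta) * (INR (fact n) / INR n ^ n)
          * (1 - alpha) ^ n * (1 - beta) ^ (n * (n + 1) / 2)))
      1.
Proof.
  intros Ha Hb nu Hst.
  assert (Hs : 0 < 1 - beta < 1) by lra.
  destruct (qinf_props (1 - beta) Hs) as [Hl [Hq Hqm]].
  set (qi := qpoch_inf (1 - beta)) in *.
  assert (Hq1 : qi <= 1) by (apply (Hqm 0%nat)).
  split.
  - destruct (M_exists (1 - beta) Hs) as [M HM].
    exists (1 / 2), (/ qi), M, 1%nat. split.
    { split. lra. assert (1 <= / qi). { rewrite <- Rinv_1. apply Rinv_le_contravar; lra. } lra. }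
    intros n k Hn [HMk Hkn].
    pose proof (Hst n Hn) as St. destruct St as [Hpos [Hsum Hstj]].
    pose proof (B_closed n alpha beta (nu n) Hn (Hst n Hn) k Hkn) as Hc.
    destruct (Dp_bounds n (1 - beta) k Hn Hs Hkn) as [H1 [H2 H3]].
    pose proof (Hqm k).
    pose proof (wgt_nonneg n alpha beta k Hn ltac:(lra) Hb) as Hw.
    set (Bk := Bm n (nu n) k) in *. set (Dk := Dp n (1 - beta) k) in *.
    set (w := wgt n alpha beta k) in *.
    assert (HBk : Bk = w / Dk) by (rewrite <- Hc; field; lra).
    split.
    + pose proof (bonf n (nu n) k Hpos Hkn) as Hbf. fold Bk in Hbf.
      set (B1 := Bm n (nu n) (S k)) in *.
      assert (HB1 : 0 <= B1) by (apply Bm_nonneg; auto).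
      assert (HBk0 : 0 <= Bk) by (apply Bm_nonneg; auto).
      pose proof (B_rec n alpha beta (nu n) k Hn (Hst n Hn)) as R. fold B1 Bk in R.
      specialize (HM k HMk).
      pose proof (pow_S_lt (1 - beta) k Hs) as Hy.
      set (y := (1 - beta) ^ S k) in *.
      assert (Hn0 : 0 < INR n) by (apply lt_0_INR; lia).
      assert (Hkn' : INR k <= INR n) by (apply le_INR; auto).
      pose proof (pos_INR k).
      assert (Hden : B1 * (INR n * (1 - (1 - beta))) <= y * (1 - alpha) * (INR n - INR k) * Bk).
      { assert (E : B1 * (INR n - y * (INR n - INR (S k))) = y * (1 - alpha) * (INR n - INR k) * Bk).
        { transitivity (B1 * INR n - y * ((INR n - INR (S k)) * B1)); [ring|]. rewrite R. ring. }
        rewrite <- E. apply Rmult_le_compat_l; auto. rewrite S_INR. nra. }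
      assert (Hr : y * (1 - alpha) * (INR n - INR k) * Bk <= y * INR n * Bk).
      { assert (0 <= y * Bk) by nra. replace (y * (1 - alpha) * (INR n - INR k) * Bk) with (((1 - alpha) * (INR n - INR k)) * (y * Bk)) by ring. replace (y * INR n * Bk) with (INR n * (y * Bk)) by ring. apply Rmult_le_compat_r; auto. nra. }
      assert (Hb1 : B1 * (1 - (1 - beta)) <= y * Bk).
      { apply Rmult_le_reg_l with (INR n); auto. nra. }
      assert (Hb2 : INR (S k) * B1 <= Bk / 2).
      { apply Rmult_le_reg_r with (1 - (1 - beta)); [lra|].
        assert (0 <= INR (S k)) by apply pos_INR.
        assert (INR (S k) * (B1 * (1 - (1 - beta))) <= INR (S k) * (y * Bk)) by (apply Rmult_le_compat_l; auto).
        assert (INR (S k) * y * Bk <= (1 - (1 - beta)) / 2 * Bk) by (apply Rmult_le_compat_r; auto).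
        nra. }
      assert (w <= Bk).
      { rewrite HBk. apply Rmult_le_reg_r with Dk; [lra|]. unfold Rdiv. rewrite Rmult_assoc, Rinv_l by lra. nra. }
      lra.
    + pose proof (nu_le_B n (nu n) k Hpos Hkn). fold Bk in H0.
      assert (Bk <= / qi * w).
      { rewrite HBk. unfold Rdiv. rewrite Rmult_comm. apply Rmult_le_compat_r; auto.
        apply Rinv_le_contravar; lra. }
      lra.
  - assert (L : is_lim_seq (fun n => qi / Dp n (1 - beta) n) 1).
    { replace (Finite 1) with (Finite (qi / qi)) by (f_equal; field; lra).
      apply is_lim_seq_div'. apply is_lim_seq_const. apply Dp_lim; auto. lra. }
    apply is_lim_seq_ext_loc with (fun n => qi / Dp n (1 - beta) n); auto.
    exists 1%nat. intros n Hn.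
    pose proof (B_closed n alpha beta (nu n) Hn (Hst n Hn) n (le_n n)) as Hc.
    rewrite Bm_n in Hc.
    destruct (Dp_bounds n (1 - beta) n Hn Hs (le_n n)) as [H1 [H2 H3]].
    assert (Hn0 : 0 < INR n) by (apply lt_0_INR; lia).
    assert (Hw : wgt n alpha beta n = INR (fact n) / INR n ^ n * (1 - alpha) ^ n * (1 - beta) ^ (n * (n + 1) / 2)).
    { unfold wgt. rewrite <- (falling_fact n n) by lia. rewrite Nat.sub_diag. change (INR (fact 0)) with 1. rewrite Rmult_1_r. reflexivity. }
    assert (Hwp : 0 < wgt n alpha beta n).
    { rewrite Hw. repeat apply Rmult_lt_0_compat; try (apply pow_lt; lra).
      apply lt_0_INR, lt_O_fact. apply Rinv_0_lt_compat, pow_lt; lra. }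
    replace (1 / qi * (INR (fact n) / INR n ^ n) * (1 - alpha) ^ n * (1 - beta) ^ (n * (n + 1) / 2)) with (1 / qi * wgt n alpha beta n) by (rewrite Hw; ring).
    assert (nu n n = wgt n alpha beta n / Dp n (1 - beta) n) by (rewrite <- Hc; field; lra).
    rewrite H. field. split; lra.
Qed.
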